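(* Let $\mathcal G=(\mathcal V,\mathcal E)$ be a hypergraph with $\mathcal V=[n]$, all of whose edges are nonempty, with set of special vertices $\mathcal V^{\mathrm{sp}}\subseteq\mathcal V$. Then for every $q\in\mathbb Z$ we have, as formal power series in $\mathbb Q[[x_1,\dots,x_n]]$, \[ I^{\mathrm{mark}}(\mathcal G,x)^q=\sum_{\mathbf m\in\mathbb Z_{\ge0}^n}{}_{\mathbf m}\Pi^{\mathrm{mark}}_{\mathcal G}(q)\,x^{\mathbf m}, \] where ${}_{\mathbf m}\Pi^{\mathrm{mark}}_{\mathcal G}$ denotes the unique polynomial in $q$ whose value at each positive integer $q$ is the number of marked multi-colorings of $\mathcal G$ associated to $\mathbf m$ using at most $q$ colors (for $\mathbf m=\mathbf 0$ this polynomial is the constant $1$).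
   Context: A hypergraph $\mathcal G=(\mathcal V,\mathcal E)$ has vertex set $\mathcal V=[n]=\{1,\dots,n\}$ and edge set $\mathcal E$ a collection of subsets of $[n]$; $\mathcal V^{\mathrm{sp}}\subseteq\mathcal V$ is a fixed set of special vertices. A finite multiset $U$ with elements in $\mathcal V$ is marked-independent if its underlying set contains no edge $e\in\mathcal E$ and every vertex of $\mathcal V\setminus\mathcal V^{\mathrm{sp}}$ occurs at most once in $U$ (the empty multiset is marked-independent). For such $U$, $x(U)=\prod_v x_v^{r_v}$ where $v$ occurs $r_v$ times in $U$. The marked independence series is $I^{\mathrm{mark}}(\mathcal G,x)=\sum_U x(U)$, summed over all marked-independent multisets $U$; it has constant term $1$. For $\mathbf m=(m_v)\in\mathbb Z_{\ge0}^n$ and $q\in\mathbb N$, a marked multi-coloring of $\mathcal G$ associated to $\mathbf m$ using at most $q$ colors is a map $\Gamma$ assigning to each $v$ a finite multiset $\Gamma(v)$ with elements in $\{1,\dots,q\}$ such that $\Gamma(v)$ is a set for $v\notin\mathcal V^{\mathrm{sp}}$, $|\Gamma(v)|=m_v$ (with multiplicity), and for every $e\in\mathcal E$ the underlying sets of $\Gamma(v)$, $v\in e$, have empty common intersection; two colorings are distinct if they differ at some vertex. $x^{\mathbf m}=\prod_v x_v^{m_v}$. *)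

(* Defs.v *)
From mathcomp Require Import all_boot all_order all_algebra.
Set Implicit Arguments. Unset Strict Implicit. Unset Printing Implicit Defensive.
Import Order.TTheory GRing.Theory Num.Theory.
Local Open Scope ring_scope.

(* Vertices are 'I_n (i.e. {0,...,n-1}, standing for [n]).
   A multi-index m in Z_{>=0}^n is a finite function 'I_n -> nat.
   A formal power series in Q[[x_1..x_n]] is its coefficient function. *)
Definition midx (n : nat) := {ffun 'I_n -> nat}.
Definition series (n : nat) := midx n -> rat.

(* max entry of a multi-index, used to bound finite enumerations *)
Definition mbnd n (m : midx n) : nat := (\max_(i < n) m i)%N.
Definition mdeg n (m : midx n) : nat := (\sum_(i < n) m i)%N.

Definition mzero n (m : midx n) : bool := [forall i, m i == 0%N].

Definition sone n : series n := fun m => if mzero m then 1 else 0.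

Definition smul n (f g : series n) : series n := fun m =>
  \sum_(a : {ffun 'I_n -> 'I_(mbnd m).+1} | [forall i, (a i <= m i)%N])
     f [ffun i => (a i : nat)] * g [ffun i => (m i - a i)%N].

Definition spow n (f : series n) (k : nat) : series n := iter k (smul f) (@sone n).

(* inverse of a series with constant term 1: f^{-1} = sum_k (1-f)^k,
   where the coefficient at m only involves k <= |m| *)
Definition sinv n (f : series n) : series n := fun m =>
  \sum_(k < (mdeg m).+1) spow (fun a => sone a - f a) k m.

Definition sipow n (f : series n) (q : int) : series n :=
  match q with
  | Posz k => spow f k
  | Negz k => spow (sinv f) k.+1
  end.

Definition marked_indep n (E : {set {set 'I_n}}) (Vsp : {set 'I_n}) (m : midx n) : bool :=
  [forall e in E, ~~ (e \subset [set v | (0 < m v)%N])] &&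
  [forall v, (v \notin Vsp) ==> (m v <= 1)%N].

(* marked independence series: each marked-independent multiset U contributes
   x(U) = x^m, and U is determined by its multiplicity vector m *)
Definition Imark n (E : {set {set 'I_n}}) (Vsp : {set 'I_n}) : series n :=
  fun m => if marked_indep E Vsp m then 1 else 0.

(* A marked multi-coloring associated to m with at most q colors (colors are 'I_q):
   Gamma v c = multiplicity of color c in the multiset Gamma(v).  Multiplicities
   are bounded by m v <= mbnd m, so the finite type below contains them all. *)
Definition is_marked_coloring n (E : {set {set 'I_n}}) (Vsp : {set 'I_n})
  (m : midx n) (q : nat) (G : {ffun 'I_n -> {ffun 'I_q -> 'I_(mbnd m).+1}}) : bool :=
  [forall v, (\sum_(c < q) (G v c : nat))%N == m v] &&
  [forall v, (v \notin Vsp) ==> [forall c, (G v c <= 1)%N]] &&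
  [forall e in E, ~~ [exists c : 'I_q, [forall v in e, (0 < G v c)%N]]].

Definition n_marked_colorings n (E : {set {set 'I_n}}) (Vsp : {set 'I_n})
  (m : midx n) (q : nat) : nat :=
  #|[set G | @is_marked_coloring n E Vsp m q G]|.

(* Main.v *)
Require Import Defs.
From mathcomp Require Import all_boot all_order all_algebra.
From mathcomp Require Import mpoly.
From mathcomp Require Import ring.
Import GRing.Theory Num.Theory.
Set Implicit Arguments. Unset Strict Implicit. Unset Printing Implicit Defensive.
Local Open Scope ring_scope.

Definition natf n K (a : {ffun 'I_n -> 'I_K}) : midx n := [ffun i => (a i : nat)].
Definition mx n (a : midx n) : 'X_{1..n} := [multinom a i | i < n].
Definition ffk n (k : 'X_{1..n}) : midx n := [ffun i => k i].
Definition Tr n (m : midx n) (f : series n) : {mpoly rat[n]} :=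
  \sum_(a : {ffun 'I_n -> 'I_(mbnd m).+1}) f (natf a) *: 'X_[mx (natf a)].
Definition lem_ n (m : midx n) (k : 'X_{1..n}) := forall i, (k i <= m i)%N.
Definition eqv n (m : midx n) (p q : {mpoly rat[n]}) :=
  forall k, lem_ m k -> p@_k = q@_k.

Lemma mx_ffk n (k : 'X_{1..n}) : mx (ffk k) = k.
Proof. by apply/mnmP => i; rewrite mnmE ffunE. Qed.
Lemma ffk_mx n (a : midx n) : ffk (mx a) = a.
Proof. by apply/ffunP => i; rewrite ffunE mnmE. Qed.

Lemma m_ltK n (m : midx n) i : (m i < (mbnd m).+1)%N.
Proof. by rewrite ltnS /mbnd; apply: (@leq_bigmax _ (fun i => m i)). Qed.

Lemma inord_back K1 K2 (x : 'I_K2.+1) :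
  (inord (inord x : 'I_K1.+1) : 'I_K2.+1) = x -> ((inord x : 'I_K1.+1) : nat) = x.
Proof.
move=> e; case: (leqP x K1) => h; first by rewrite inordK.
have h0 : (inord x : 'I_K1.+1) = ord0.
  by apply/val_inj; rewrite /= /inord /insubd insubF //= ltnS leqNgt h.
by move: e h; rewrite h0 => <-; rewrite /= inordK.
Qed.

Lemma box_indep n (F : midx n -> rat) (c : midx n) K1 K2 :
  (forall i, c i < K1.+1)%N -> (forall i, c i < K2.+1)%N ->
  \sum_(a : {ffun 'I_n -> 'I_K1.+1} | [forall i, (a i <= c i)%N]) F (natf a) =
  \sum_(a : {ffun 'I_n -> 'I_K2.+1} | [forall i, (a i <= c i)%N]) F (natf a).
Proof.
move=> h1 h2.
rewrite (reindex_onto (fun b : {ffun 'I_n -> 'I_K2.+1} => [ffun i => inord (b i)] : {ffun 'I_n -> 'I_K1.+1})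
   (fun a : {ffun 'I_n -> 'I_K1.+1} => [ffun i => inord (a i)] : {ffun 'I_n -> 'I_K2.+1})); last first.
  move=> a /forallP ha; apply/ffunP => i; apply/val_inj; rewrite !ffunE /=.
  rewrite (@inordK K2 (a i)); last by apply: leq_ltn_trans (ha i) (h2 i).
  by rewrite inordK.
apply: eq_big => [b|b /andP[_ /eqP hh]].
  apply/idP/idP.
    case/andP => /forallP hb /eqP hh; apply/forallP => i.
    move/ffunP: hh => /(_ i); rewrite !ffunE => /inord_back e.
    by have := hb i; rewrite ffunE e.
  move/forallP => hb; apply/andP; split.
    apply/forallP => i; rewrite ffunE inordK //; apply: leq_ltn_trans (hb i) (h1 i).
  apply/eqP/ffunP => i; apply/val_inj; rewrite !ffunE /=.
  by rewrite (@inordK K1 (b i)) ?inordK //; apply: leq_ltn_trans (hb i) (h1 i).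
congr F; apply/ffunP => i; rewrite !ffunE.
by move/ffunP: hh => /(_ i); rewrite !ffunE => /inord_back.
Qed.

Lemma spow_nil n (g : series n) : (forall z, mzero z -> g z = 0) ->
  forall j b, (Defs.mdeg b < j)%N -> spow g j b = 0.
Proof.
move=> hg; elim=> [|j IH] b hb //.
rewrite /spow iterS -/(spow g j) /smul; apply: big1 => a /forallP ha.
case: (boolP (mzero [ffun i => (a i : nat)])) => [hz|nz]; first by rewrite hg ?mul0r.
rewrite IH ?mulr0 //.
have e : (Defs.mdeg [ffun i => (b i - a i)%N] + Defs.mdeg [ffun i => (a i : nat)])%N = Defs.mdeg b.
  rewrite /Defs.mdeg -big_split /=; apply: eq_bigr => i _; rewrite !ffunE subnK //.
have pos : (0 < Defs.mdeg [ffun i => (a i : nat)])%N.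
  case/forallPn: nz => i; rewrite ffunE -lt0n => hi.
  by rewrite /Defs.mdeg (bigD1 i) //= ffunE (leq_trans hi) // leq_addr.
rewrite -ltnS; apply: leq_trans hb; rewrite -e ltnS -addn1 leq_add2l //.
Qed.

Section Tr.
Variable n : nat.
Variable m : midx n.

Lemma coefT f k : lem_ m k -> (Tr m f)@_k = f (ffk k).
Proof.
move=> hk.
pose a0 : {ffun 'I_n -> 'I_(mbnd m).+1} := [ffun i => inord (k i)].
have ha0 : natf a0 = ffk k.
  apply/ffunP => i; rewrite !ffunE inordK //.
  exact: leq_ltn_trans (hk i) (m_ltK m i).
rewrite /Tr raddf_sum (bigD1 a0) //= big1 ?addr0.
  by rewrite mcoeffZ mcoeffX ha0 mx_ffk eqxx mulr1.
move=> a ne; rewrite mcoeffZ mcoeffX.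
case: eqP => [e|]; last by rewrite mulr0.
case/eqP: ne; apply/ffunP => i; apply/val_inj.
rewrite /a0 ffunE /= inordK; last first.
  exact: leq_ltn_trans (hk i) (m_ltK m i).
by rewrite -e mnmE ffunE.
Qed.

Lemma eqv_refl p : eqv m p p. Proof. by []. Qed.
Lemma eqv_sym p q : eqv m p q -> eqv m q p. Proof. by move=> h k hk; rewrite h. Qed.
Lemma eqv_trans p q r : eqv m p q -> eqv m q r -> eqv m p r.
Proof. by move=> h1 h2 k hk; rewrite h1 // h2. Qed.

Lemma eqvM p p' q q' : eqv m p p' -> eqv m q q' -> eqv m (p * q) (p' * q').
Proof.
move=> hp hq k hk; rewrite !mcoeffM; apply: eq_bigr => x e.
have ei i : k i = (x.1 i + x.2 i)%N.
  by have := congr1 (fun t : 'X_{1..n} => t i) (eqP e); rewrite /= mnmDE.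
have l1 : lem_ m x.1 by move=> i; apply: leq_trans (hk i); rewrite ei leq_addr.
have l2 : lem_ m x.2 by move=> i; apply: leq_trans (hk i); rewrite ei leq_addl.
by rewrite hp // hq.
Qed.

Lemma eqvX p q j : eqv m p q -> eqv m (p ^+ j) (q ^+ j).
Proof. by move=> h; elim: j => [|j IH]; rewrite ?expr0 // !exprS; apply: eqvM. Qed.

Lemma eqvD p p' q q' : eqv m p p' -> eqv m q q' -> eqv m (p + q) (p' + q').
Proof. by move=> hp hq k hk; rewrite !mcoeffD hp ?hq. Qed.

Lemma eqvT p f : (forall k, lem_ m k -> p@_k = f (ffk k)) -> eqv m p (Tr m f).
Proof. by move=> h k hk; rewrite coefT // h. Qed.

Lemma eqkE K (a b : {ffun 'I_n -> 'I_K}) (k : 'X_{1..n}) :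
  (mx (natf a) + mx (natf b) == k)%MM = [forall i, (a i + b i == k i)%N].
Proof.
apply/eqP/forallP => [e i|h].
  by rewrite -e mnmDE !mnmE !ffunE.
by apply/mnmP => i; rewrite mnmDE !mnmE !ffunE; apply/eqP.
Qed.

Lemma TsmulE f g : eqv m (Tr m (smul f g)) (Tr m f * Tr m g).
Proof.
apply: eqv_sym; apply: eqvT => k hk.
have -> : Tr m f * Tr m g = \sum_(a : {ffun 'I_n -> 'I_(mbnd m).+1})
    \sum_(b : {ffun 'I_n -> 'I_(mbnd m).+1})
      (f (natf a) * g (natf b)) *: 'X_[mx (natf a) + mx (natf b)].
  rewrite /Tr mulr_suml; apply: eq_bigr => a _; rewrite mulr_sumr; apply: eq_bigr => b _.
  by rewrite mpolyXD -scalerAl -scalerAr scalerA.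
have hkK i : (k i < (mbnd m).+1)%N by apply: leq_ltn_trans (hk i) (m_ltK m i).
pose c := ffk k.
have hc1 i : (c i < (mbnd c).+1)%N by apply: m_ltK.
have hc2 i : (c i < (mbnd m).+1)%N by rewrite ffunE.
pose F := fun a : midx n => f a * g [ffun i => (c i - a i)%N].
rewrite /smul.
transitivity (\sum_(a : {ffun 'I_n -> 'I_(mbnd m).+1} | [forall i, (a i <= c i)%N]) F (natf a)); last first.
  rewrite -(box_indep F hc1 hc2); apply: eq_bigr => a _; rewrite /F; congr (_ * g _).
  by apply/ffunP => i; rewrite !ffunE.
rewrite raddf_sum [RHS]big_mkcond /=; apply: eq_bigr => a _.
rewrite raddf_sum /=.
case: ifP => [/forallP ha|/negbT ha].
  pose b0 : {ffun 'I_n -> 'I_(mbnd m).+1} := [ffun i => inord (k i - a i)].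
  have hb0 i : ((b0 i : nat) = k i - a i)%N.
    by rewrite ffunE inordK // (leq_ltn_trans _ (hkK i)) // leq_subr.
  rewrite (bigD1 b0) //= big1 ?addr0.
    rewrite mcoeffZ mcoeffX eqkE.
    have -> : [forall i, (a i + b0 i == k i)%N].
      apply/forallP => i; rewrite hb0 subnKC //; have := ha i; rewrite ffunE //.
    rewrite mulr1 /F; congr (_ * g _); apply/ffunP => i.
    by rewrite [natf b0 i]ffunE hb0 !ffunE.
  move=> b nb; rewrite mcoeffZ mcoeffX eqkE.
  case: forallP => [h|]; last by rewrite mulr0.
  case/eqP: nb; apply/ffunP => i; apply/val_inj; rewrite /= hb0.
  by move/eqP: (h i) => <-; rewrite addKn.
apply: big1 => b _; rewrite mcoeffZ mcoeffX eqkE.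
case: forallP => [h|]; last by rewrite mulr0.
case/negP: ha; apply/forallP => i; rewrite ffunE; move/eqP: (h i) => <-.
exact: leq_addr.
Qed.

Lemma Tone : eqv m (Tr m (@sone n)) 1.
Proof.
move=> k hk; rewrite coefT // mcoeff1 /sone.
have -> : mzero (ffk k) = (k == 0%MM).
  apply/forallP/eqP => [h|->] ; last by move=> i; rewrite ffunE mnm0E.
  by apply/mnmP => i; rewrite mnm0E; move/eqP: (h i); rewrite ffunE.
by case: (k == 0%MM).
Qed.

Lemma Tspow f j : eqv m (Tr m (spow f j)) (Tr m f ^+ j).
Proof.
elim: j => [|j IH]; first by rewrite expr0; apply: Tone.
rewrite exprS /spow iterS -/(spow f j).
apply: eqv_trans (TsmulE _ _) _; apply: eqvM => //; exact: eqv_refl.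
Qed.

End Tr.


Lemma sum_ext (V : nmodType) (F : nat -> V) s M : (s <= M)%N ->
  (forall i, (s <= i < M)%N -> F i = 0) -> \sum_(i < s) F i = \sum_(i < M) F i.
Proof.
move=> hsM h; rewrite -!(big_mkord xpredT) (@big_cat_nat _ _ _ s 0 M _ _ (leq0n s) hsM) /=.
rewrite [X in _ = _ + X]big_nat_cond [X in _ = _ + X]big1 ?addr0 // => i.
by rewrite andbT => /h.
Qed.

Lemma coef1X (q i : nat) : ((1 - 'X : {poly rat}) ^+ q)`_i = (-1) ^+ i * 'C(q, i)%:R.
Proof.
elim: q i => [|q IH] i.
  by rewrite expr0 coef1; case: i => [|i]; rewrite ?expr0 ?mul1r // bin0n mulr0.
rewrite exprS mulrBl mul1r coefB coefXM !IH.
case: i => [|i] /=; first by rewrite !bin0 !expr0 subr0.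
by rewrite binS natrD exprS; ring.
Qed.

Lemma hockey (l i : nat) : (\sum_(j < i.+1) 'C(l + j, j))%N = 'C(l.+1 + i, i).
Proof.
elim: i => [|i IH]; first by rewrite big_ord1 !addn0 !bin0.
rewrite big_ord_recr /= IH.
have -> : (l.+1 + i.+1 = (l + i.+1).+1)%N by rewrite addSn.
by rewrite binS addnC addSn addnS.
Qed.

Section S.
Variable N : nat.
Definition sgeo : {poly rat} := \sum_(j < N) 'X^j.
Lemma coef_sgeo i : sgeo`_i = (i < N)%:R.
Proof.
rewrite /sgeo coef_sum.
case: (ltnP i N) => h.
  rewrite (bigD1 (Ordinal h)) //= coefXn eqxx big1 ?addr0 // => j nj.
  by rewrite coefXn; case: eqP => // e; case/eqP: nj; apply/val_inj.
by rewrite big1 // => j _; rewrite coefXn; case: eqP => // e; move: (ltn_ord j); rewrite -e ltnNge h.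
Qed.

Lemma coef_sgeoX l i : (i < N)%N -> (sgeo ^+ l.+1)`_i = 'C(l + i, i)%:R.
Proof.
elim: l i => [|l IH] i hi.
  by rewrite expr1 coef_sgeo hi add0n binn.
rewrite exprSr coefM.
rewrite (eq_bigr (fun j : 'I_i.+1 => ('C(l + j, j))%:R)); last first.
  move=> j _; rewrite IH; last by apply: leq_ltn_trans hi; exact: leq_ord.
  by rewrite coef_sgeo (leq_ltn_trans _ hi) ?leq_subr // mulr1.
by rewrite -natr_sum hockey.
Qed.
End S.

Definition bp (j : nat) : {poly rat} := (j`!%:R)^-1 *: \prod_(i < j) ('X - (i%:R)%:P).

Lemma bpE j x : (bp j).[x] = (j`!%:R)^-1 * \prod_(i < j) (x - i%:R).
Proof. by rewrite /bp hornerZ horner_prod; congr (_ * _); apply: eq_bigr => i _; rewrite hornerXsubC. Qed.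

Lemma fact_neq0 j : (j`!%:R : rat) != 0.
Proof. by rewrite pnatr_eq0 -lt0n fact_gt0. Qed.

Lemma bp_nat q j : (bp j).[q%:R] = 'C(q, j)%:R.
Proof.
rewrite bpE.
have -> : \prod_(i < j) (q%:R - i%:R : rat) = ('C(q, j) * j`!)%:R.
  elim: j => [|j IH]; first by rewrite big_ord0 bin0 fact0.
  rewrite big_ord_recr /= IH factS.
  case: (leqP j q) => hj.
    rewrite -natrB // -natrM; congr (_%:R).
    by rewrite mulnA (mulnC _ j.+1) mul_bin_left [LHS]mulnC mulnA.
  rewrite bin_small ?mul0n ?mul0r //.
  by rewrite bin_small ?mul0n // ltnW.
by rewrite natrM mulrC -mulrA divff ?mulr1 // fact_neq0.
Qed.

Lemma bp_neg l j : (bp j).[- (l.+1)%:R] = (-1) ^+ j * 'C(l + j, j)%:R.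
Proof.
rewrite bpE.
have -> : \prod_(i < j) (- (l.+1)%:R - i%:R : rat) = (-1) ^+ j * ('C(l + j, j) * j`!)%:R.
  elim: j => [|j IH]; first by rewrite big_ord0 bin0 fact0 expr0 mul1r.
  rewrite big_ord_recr /= IH factS.
  have e : (j.+1 * 'C(l + j.+1, j.+1) = (l + j).+1 * 'C(l + j, j))%N.
    by rewrite -mul_bin_diag addnS.
  have -> : ('C(l + j.+1, j.+1) * (j.+1 * j`!))%N = ((l + j).+1 * 'C(l + j, j) * j`!)%N.
    by rewrite mulnA (mulnC _ j.+1) e.
  rewrite !natrM exprS -addnS !natrD; ring.
have := fact_neq0 j; rewrite natrM => h; field => //.
Qed.

Lemma ev_sum n (G : {mpoly rat[n]}) p :
  horner_alg G p = \sum_(i < size p) p`_i *: G ^+ i.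
Proof.
rewrite -{1}(coefK p) poly_def linear_sum /=; apply: eq_bigr => i _.
by rewrite -mul_polyC rmorphM /= horner_algC rmorphXn /= horner_algX -scalerAl mul1r.
Qed.

Lemma prodZX n I0 (r : seq I0) (a : I0 -> rat) (e : I0 -> 'X_{1..n}) :
  \prod_(i <- r) (a i *: 'X_[e i] : {mpoly rat[n]}) =
  (\prod_(i <- r) a i) *: 'X_[(\sum_(i <- r) e i)%MM].
Proof.
elim: r => [|x r IH]; first by rewrite !big_nil mpolyX0 scale1r.
by rewrite !big_cons IH mpolyXD -scalerAl -scalerAr scalerA.
Qed.

Lemma bool3 (a b c : bool) : (a && b) && c = (c && b) && a.
Proof. by case: a; case: b; case: c. Qed.

Section Comb.
Variables (n : nat) (E : {set {set 'I_n}}) (Vsp : {set 'I_n}) (m : midx n) (q : nat).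
Let K := (mbnd m).+1.
Let Bx := {ffun 'I_n -> 'I_K}.
Definition trT (h : {ffun 'I_q -> Bx}) : {ffun 'I_n -> {ffun 'I_q -> 'I_K}} :=
  [ffun v => [ffun c => h c v]].
Definition trT' (G : {ffun 'I_n -> {ffun 'I_q -> 'I_K}}) : {ffun 'I_q -> Bx} :=
  [ffun c => [ffun v => G v c]].
Lemma trTK G : trT (trT' G) = G.
Proof. by apply/ffunP => v; apply/ffunP => c; rewrite !ffunE. Qed.
Lemma trTK' h : trT' (trT h) = h.
Proof. by apply/ffunP => c; apply/ffunP => v; rewrite !ffunE. Qed.

Definition Ph (h : {ffun 'I_q -> Bx}) : bool :=
  [forall c, marked_indep E Vsp (natf (h c))] &&
  ((\sum_(c < q) mx (natf (h c)))%MM == mx m).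

Lemma col_tr h : is_marked_coloring E Vsp (trT h) = Ph h.
Proof.
have s1 : [forall v, (\sum_(c < q) (trT h v c : nat))%N == m v] =
          ((\sum_(c < q) mx (natf (h c)))%MM == mx m).
  apply/forallP/eqP => [H|H].
    apply/mnmP => v; rewrite mnm_sumE mnmE -(eqP (H v)).
    by apply: eq_bigr => c _; rewrite mnmE !ffunE.
  move=> v; have := congr1 (fun t : 'X_{1..n} => t v) H; rewrite /= mnm_sumE mnmE => <-.
  by apply/eqP; apply: eq_bigr => c _; rewrite mnmE !ffunE.
have s2 : [forall v, (v \notin Vsp) ==> [forall c, (trT h v c <= 1)%N]] =
          [forall c, [forall v, (v \notin Vsp) ==> (natf (h c) v <= 1)%N]].
  apply/forallP/forallP => H x.
    apply/forallP => v; apply/implyP => hv; have := H v; rewrite hv /=.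
    by move/forallP/(_ x); rewrite !ffunE.
  apply/implyP => hv; apply/forallP => c; have := H c.
  by move/forallP/(_ x); rewrite hv /= !ffunE.
have s3 : [forall e in E, ~~ [exists c : 'I_q, [forall v in e, (0 < trT h v c)%N]]] =
          [forall c, [forall e in E, ~~ (e \subset [set v | (0 < natf (h c) v)%N])]].
  apply/idP/idP.
    move=> /forall_inP H; apply/forallP => c; apply/forall_inP => e he; apply/negP => hs.
    have := H e he; move/negP; apply; apply/existsP; exists c; apply/forall_inP => v hv.
    by have := subsetP hs v hv; rewrite inE !ffunE.
  move=> /forallP H; apply/forall_inP => e he; apply/negP => /existsP [c /forall_inP hc].
  have := H c => /forall_inP /(_ e he) /negP; apply; apply/subsetP => v hv.
  by rewrite inE ffunE; have := hc v hv; rewrite !ffunE.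
have s4 : [forall c, marked_indep E Vsp (natf (h c))] =
   [forall c, [forall e in E, ~~ (e \subset [set v | (0 < natf (h c) v)%N])]] &&
   [forall c, [forall v, (v \notin Vsp) ==> (natf (h c) v <= 1)%N]].
  apply/forallP/andP => [H|[/forallP H1 /forallP H2] c].
    by split; apply/forallP => c; have /andP[] := H c.
  by apply/andP; split.
by rewrite /is_marked_coloring s1 s2 s3 /Ph s4 bool3.
Qed.

Lemma card_col :
  n_marked_colorings E Vsp m q = #|[set h | Ph h]|.
Proof.
rewrite /n_marked_colorings.
have -> : [set G | is_marked_coloring E Vsp (m:=m) (q:=q) G] = trT @: [set h | Ph h].
  apply/setP => G; rewrite inE; apply/idP/imsetP => [hG|[h hh ->]].
    exists (trT' G); last by rewrite trTK.
    by rewrite inE -col_tr trTK.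
  by rewrite col_tr; rewrite inE in hh.
by rewrite card_imset //; apply: (can_inj trTK').
Qed.

Lemma prodI (x : 'I_q -> midx n) :
  \prod_(c < q) Imark E Vsp (x c) = ([forall c, marked_indep E Vsp (x c)])%:R.
Proof.
case: (boolP [forall c, _]) => [/forallP h|/forallPn [c hc]].
  by apply: big1 => c _; rewrite /Imark h.
by rewrite (bigD1 c) //= /Imark (negbTE hc) mul0r.
Qed.

Lemma comb : spow (Imark E Vsp) q m = (n_marked_colorings E Vsp m q)%:R.
Proof.
have hmm : lem_ m (mx m) by move=> i; rewrite mnmE.
rewrite -[in LHS](ffk_mx m) -(@coefT n m _ (mx m) hmm) (@Tspow n m _ q (mx m) hmm).
have -> : Tr m (Imark E Vsp) ^+ q = \prod_(c < q) Tr m (Imark E Vsp).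
  by elim: (q) => [|j IH]; [rewrite big_ord0 | rewrite big_ord_recl -IH exprS].
rewrite /Tr bigA_distr_bigA /= raddf_sum /=.
rewrite (eq_bigr (fun h : {ffun 'I_q -> Bx} => if Ph h then 1 else 0)); last first.
  move=> h _; rewrite prodZX mcoeffZ mcoeffX prodI /Ph.
  by case: [forall c, _]; case: eqP; rewrite ?mulr1 ?mulr0.
rewrite -big_mkcond /= card_col.
rewrite (eq_bigl (fun h => h \in [set h | Ph h])); last by move=> h; rewrite inE.
by rewrite sumr_const.
Qed.
End Comb.

Section Main.
Variables (n : nat) (E : {set {set 'I_n}}) (Vsp : {set 'I_n}).
Hypothesis hE : forall e, e \in E -> e != set0.
Variable m : midx n.
Let I := Imark E Vsp.
Let g : series n := fun a => sone a - I a.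
Let G := Tr m g.
Let N := (Defs.mdeg m).+1.
Let mm := mx m.
Let c j := (G ^+ j)@_mm.

Lemma mm_le : lem_ m mm.
Proof. by move=> i; rewrite mnmE. Qed.

Lemma ffk_mm : ffk mm = m.
Proof. exact: ffk_mx. Qed.

Lemma I0 z : mzero z -> I z = 1.
Proof.
move/forallP => hz; rewrite /I /Imark /marked_indep.
have -> : [forall e in E, ~~ (e \subset [set v | (0 < z v)%N])].
  apply/forall_inP => e he; apply/negP => hs; move/eqP: (hE he); apply.
  apply/eqP; rewrite -subset0; apply: subset_trans hs _.
  by apply/subsetP => v; rewrite inE (eqP (hz v)).
have -> // : [forall v, (v \notin Vsp) ==> (z v <= 1)%N].
by apply/forallP => v; rewrite (eqP (hz v)) implybT.
Qed.

Lemma g0 z : mzero z -> g z = 0.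
Proof. by move=> hz; rewrite /g I0 // /sone hz subrr. Qed.

Lemma c_big j : (N <= j)%N -> c j = 0.
Proof.
move=> hj; rewrite /c -(@Tspow n m g j mm mm_le) coefT ?mm_le //.
have -> : ffk mm = m by apply: ffk_mx.
apply: spow_nil; [exact: g0 | exact: hj].
exact: mm_le.
Qed.

Lemma coef_ev p : (horner_alg G p)@_mm = \sum_(j < N) p`_j * c j.
Proof.
rewrite ev_sum raddf_sum /=.
rewrite (eq_bigr (fun i : 'I_(size p) => p`_i * c i)); last by move=> i _; rewrite mcoeffZ.
rewrite (@sum_ext _ (fun i => p`_i * c i) (size p) (maxn (size p) N)) ?leq_maxl //; last first.
  by move=> i /andP[hi _]; rewrite nth_default ?mul0r.
rewrite (@sum_ext _ (fun i => p`_i * c i) N (maxn (size p) N)) ?leq_maxr //.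
by move=> i /andP[hi _]; rewrite c_big ?mulr0.
Qed.

Lemma TI : eqv m (Tr m I) (1 - G).
Proof.
apply: eqv_sym; apply: eqvT => k hk.
by rewrite mcoeffB -(@Tone n m k hk) !coefT // /g opprB addrC subrK.
Qed.

Lemma pos q : spow I q m = \sum_(j < N) c j * ((-1) ^+ j * 'C(q, j)%:R).
Proof.
rewrite -[in LHS]ffk_mm -(@coefT n m _ mm mm_le).
rewrite (@Tspow n m I q mm mm_le).
rewrite (eqvX q TI mm_le).
have -> : (1 - G) ^+ q = horner_alg G ((1 - 'X) ^+ q).
  by rewrite rmorphXn rmorphB rmorph1 /= horner_algX.
rewrite coef_ev; apply: eq_bigr => j _; by rewrite coef1X mulrC.
Qed.

Lemma TsinvI : eqv m (Tr m (sinv I)) (horner_alg G (sgeo N)).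
Proof.
apply: eqv_sym; apply: eqvT => k hk.
rewrite /sgeo rmorph_sum raddf_sum /=.
rewrite (eq_bigr (fun j : 'I_N => spow g j (ffk k))); last first.
  by move=> j _; rewrite rmorphXn /= horner_algX -(@Tspow n m g j k hk) coefT.
rewrite /sinv -/g.
apply: esym; apply: (@sum_ext _ (fun j => spow g j (ffk k))).
  rewrite ltnS /Defs.mdeg; apply: leq_sum => i _; rewrite ffunE; exact: hk.
by move=> j /andP[hj _]; apply: spow_nil => //; exact: g0.
Qed.

Lemma neg l : spow (sinv I) l.+1 m = \sum_(j < N) c j * 'C(l + j, j)%:R.
Proof.
rewrite -[in LHS]ffk_mm -(@coefT n m _ mm mm_le) (@Tspow n m _ _ mm mm_le).
rewrite (eqvX _ TsinvI mm_le) -rmorphXn coef_ev.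
by apply: eq_bigr => j _; rewrite coef_sgeoX // mulrC.
Qed.

Definition Pm : {poly rat} := \sum_(j < N) (c j * (-1) ^+ j) *: bp j.

Lemma PmE x : Pm.[x] = \sum_(j < N) c j * (-1) ^+ j * (bp j).[x].
Proof. by rewrite /Pm horner_sum; apply: eq_bigr => j _; rewrite hornerZ. Qed.

Lemma Pm_pos q : Pm.[q%:R] = spow I q m.
Proof. by rewrite PmE pos; apply: eq_bigr => j _; rewrite bp_nat mulrA. Qed.

Lemma Pm_neg l : Pm.[- (l.+1)%:R] = spow (sinv I) l.+1 m.
Proof.
rewrite PmE neg; apply: eq_bigr => j _; rewrite bp_neg.
by rewrite mulrA -(mulrA (c j)) -exprMn mulrNN mulr1 expr1n mulr1.
Qed.

End Main.

Theorem theorem4p3 (n : nat) (E : {set {set 'I_n}}) (Vsp : {set 'I_n}) :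
  (forall e, e \in E -> e != set0) ->
  forall m : midx n,
    exists P : {poly rat},
      (forall q : nat, (0 < q)%N -> P.[q%:R] = (n_marked_colorings E Vsp m q)%:R) /\
      (forall q : int, sipow (Imark E Vsp) q m = P.[q%:~R]).
Proof.
move=> hE m; exists (Pm E Vsp m); split.
  by move=> q _; rewrite (@Pm_pos n E Vsp hE m) comb.
case=> k /=.
  by rewrite (@Pm_pos n E Vsp hE m).
by rewrite NegzE mulrNz (@Pm_neg n E Vsp hE m).
Qed.
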